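(* Fix $-1\le\eta_1<\eta_2\le1$ and $\delta>0$. For all $x\ge2$ and $Z\ge2$, $$ \sum_{s\in S(-1,1;x)}T_Z(W(s))\ll_{\delta,\mathbb{K}} x^{1/2+\delta}\left(\log Z+\frac{x\log x}{Z}\right). $$ In particular, for $Z=x$ the sum is $\ll_{\delta,\mathbb{K}} x^{1/2+2\delta}$.
   Context: $\mathbb{K}=\mathbb{Q}(\sqrt d)$ is a real quadratic field of class number one, $\epsilon>1$ its fundamental unit, $\sigma_1,\sigma_2$ the identity and conjugate embeddings, $\mathcal{N}(a)=|N_{\mathbb{K}/\mathbb{Q}}(a)|$. $S(-1,1;x)=\{s\in\mathcal{O}_{\mathbb{K}}: \epsilon^{-1}|\sigma_2(s)|<|\sigma_1(s)|\le\epsilon|\sigma_2(s)|,\ \sigma_1(s)>0,\ \mathcal{N}(s)\le x\}$. For $s\ne0$, $W(s)=\log|\sigma_1(s)/\sigma_2(s)|/(2\log\epsilon)$ (so $W(s)\in(-1/2,1/2]$ on this set). $T_Z(W)=\min\{\log Z,\ 1/(Z\|W-\eta_1/2\|)+1/(Z\|W-\eta_2/2\|)\}$, where $\|X\|$ is the distance of $X$ to the nearest integer and the minimum equals $\log Z$ when a denominator vanishes. *)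

(* Defs.v *)
From HB Require Import structures.
From mathcomp Require Import all_boot all_order all_algebra.
From mathcomp Require Import all_classical all_reals all_analysis.
Set Implicit Arguments. Unset Strict Implicit. Unset Printing Implicit Defensive.
Import Order.TTheory GRing.Theory Num.Theory.
Local Open Scope classical_set_scope.
Local Open Scope ring_scope.

(** Real quadratic field K = Q(sqrt d), d > 1 squarefree.  The ring of integers
    O_K = Z[w] with w = (1+sqrt d)/2 if d = 1 mod 4 and w = sqrt d otherwise;
    an element a + b w of O_K is represented by the pair (a, b) : int * int. *)

Definition sqfree (d : nat) : Prop := forall p : nat, prime p -> ~~ (p * p %| d)%N.

Definition real_quadratic_disc (d : nat) : Prop := (1 < d)%N /\ sqfree d.

Definition OK := (int * int)%type.

(** product in O_K:  w^2 = w + (d-1)/4 if d = 1 mod 4,  w^2 = d otherwise *)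
Definition OKmul (d : nat) (s t : OK) : OK :=
  let: (a, b) := s in let: (c, e) := t in
  if (d %% 4 == 1)%N then
    (a * c + b * e * ((d - 1) %/ 4)%N%:Z, a * e + b * c + b * e)
  else (a * c + b * e * d%:Z, a * e + b * c).

Definition OKadd (s t : OK) : OK := (s.1 + t.1, s.2 + t.2).
Definition OKone : OK := (1, 0).
Definition OKzero : OK := (0, 0).

(** the two real embeddings sigma_1 (identity) and sigma_2 (conjugation) *)
Definition omega1 {R : realType} (d : nat) : R :=
  if (d %% 4 == 1)%N then (1 + Num.sqrt (d%:R)) / 2 else Num.sqrt (d%:R).
Definition omega2 {R : realType} (d : nat) : R :=
  if (d %% 4 == 1)%N then (1 - Num.sqrt (d%:R)) / 2 else - Num.sqrt (d%:R).

Definition sigma1 {R : realType} (d : nat) (s : OK) : R :=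
  s.1%:~R + s.2%:~R * omega1 d.
Definition sigma2 {R : realType} (d : nat) (s : OK) : R :=
  s.1%:~R + s.2%:~R * omega2 d.

Definition absNorm {R : realType} (d : nat) (s : OK) : R :=
  `|sigma1 d s * sigma2 d s|.

Definition is_ideal (d : nat) (I : set OK) : Prop :=
  I OKzero /\ (forall s t, I s -> I t -> I (OKadd s t)) /\
  (forall s, I s -> I ((- s.1), (- s.2))) /\
  (forall r s, I s -> I (OKmul d r s)).

Definition is_principal (d : nat) (I : set OK) : Prop :=
  exists g : OK, forall z, I z <-> exists r : OK, z = OKmul d g r.

Definition class_number_one (d : nat) : Prop :=
  forall I : set OK, is_ideal d I -> is_principal d I.

Definition is_unit (d : nat) (u : OK) : Prop := exists t : OK, OKmul d u t = OKone.

Definition is_fundamental_unit {R : realType} (d : nat) (e : OK) : Prop :=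
  is_unit d e /\ 1 < sigma1 (R := R) d e /\
  forall u, is_unit d u ->
    exists k : int, (sigma1 d u : R) = sigma1 d e ^ k \/ (sigma1 d u : R) = - (sigma1 d e ^ k).

Definition S_set {R : realType} (d : nat) (e : OK) (x : R) : set OK :=
  let eps : R := sigma1 d e in
  [set s | eps^-1 * `|(sigma2 d s : R)| < `|(sigma1 d s : R)| /\
           `|(sigma1 d s : R)| <= eps * `|(sigma2 d s : R)| /\
           0 < (sigma1 d s : R) /\ absNorm d s <= x].

Definition Wfun {R : realType} (d : nat) (e : OK) (s : OK) : R :=
  ln `|(sigma1 d s : R) / sigma2 d s| / (2 * ln (sigma1 d e : R)).

Definition distZ {R : realType} (X : R) : R :=
  Num.min (X - (Num.floor X)%:~R) ((Num.ceil X)%:~R - X).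

Definition TZ {R : realType} (eta1 eta2 Z W : R) : R :=
  let n1 := distZ (W - eta1 / 2) in
  let n2 := distZ (W - eta2 / 2) in
  if (n1 == 0) || (n2 == 0) then ln Z
  else Num.min (ln Z) ((Z * n1)^-1 + (Z * n2)^-1).

(* Main.v *)
Require Import Defs.
From HB Require Import structures.
From mathcomp Require Import all_boot all_order all_algebra.
From mathcomp Require Import all_classical all_reals all_analysis.
From mathcomp Require Import ring lra zify.
Import Order.TTheory GRing.Theory Num.Theory.
Local Open Scope classical_set_scope.
Local Open Scope ring_scope.
Set Implicit Arguments. Unset Strict Implicit.

Definition hh {R : realType} (Z t : R) : R :=
  if t == 0 then ln Z else Num.min (ln Z) ((Z * t)^-1).

Lemma hh_ge0 (R : realType) (Z t : R) : 1 <= Z -> 0 <= t -> 0 <= hh Z t.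
Proof.
move=> Z1 t0; rewrite /hh; have lZ := ln_ge0 Z1.
case: ifP => // _; rewrite le_min lZ /= invr_ge0 mulr_ge0 //.
exact: le_trans Z1.
Qed.

Lemma hh_le (R : realType) (Z t : R) : hh Z t <= ln Z.
Proof. by rewrite /hh; case: ifP => // _; rewrite ge_min lexx. Qed.

Lemma distZ_ge0 (R : realType) (X : R) : 0 <= distZ X.
Proof.
by rewrite /distZ le_min !subr_ge0 floor_le ceil_ge.
Qed.

Lemma TZ_le (R : realType) (e1 e2 Z W : R) : 1 <= Z ->
  TZ e1 e2 Z W <= hh Z (distZ (W - e1 / 2)) + hh Z (distZ (W - e2 / 2)).
Proof.
move=> Z1; rewrite /TZ.
set n1 := distZ _; set n2 := distZ _.
have h1 : 0 <= hh Z n1 by apply: hh_ge0 => //; exact: distZ_ge0.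
have h2 : 0 <= hh Z n2 by apply: hh_ge0 => //; exact: distZ_ge0.
have lZ := ln_ge0 Z1.
case: (eqVneq n1 0) => [->|n10] /=.
  by rewrite /hh eqxx lerDl.
case: (eqVneq n2 0) => [->|n20] /=.
  by rewrite /hh eqxx lerDr.
rewrite /hh (negPf n10) (negPf n20).
have a0 : 0 <= (Z * n1)^-1 by rewrite invr_ge0 mulr_ge0 // ?distZ_ge0 // (le_trans _ Z1).
have b0 : 0 <= (Z * n2)^-1 by rewrite invr_ge0 mulr_ge0 // ?distZ_ge0 // (le_trans _ Z1).
set a := (Z * n1)^-1; set b := (Z * n2)^-1.
case: (leP (ln Z) a) => ha; case: (leP (ln Z) b) => hb.
- by rewrite ge_min lerDl lZ.
- by rewrite ge_min lerDl b0.
- by rewrite ge_min lerDr a0.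
- by rewrite ge_min lexx orbT.
Qed.

Lemma hh_distZ (R : realType) (Z y : R) : 1 <= Z -> -1 <= y <= 1 ->
  hh Z (distZ y) <= hh Z `|y + 1| + hh Z `|y| + hh Z `|y - 1|.
Proof.
move=> Z1 /andP[ym yM].
have g1 : 0 <= hh Z `|y + 1| by apply: hh_ge0.
have g2 : 0 <= hh Z `|y| by apply: hh_ge0.
have g3 : 0 <= hh Z `|y - 1| by apply: hh_ge0.
suff [n [nr ->]] : exists n : int, (n = -1 \/ n = 0 \/ n = 1) /\ distZ y = `|y - n%:~R|.
  case: nr => [->|[->|->]].
  - have -> : y - (-1 : int)%:~R = y + 1 by rewrite mulrN1z opprK.
    lra.
  - rewrite subr0; lra.
  - lra.
rewrite /distZ.
have fl1 : -1 <= Num.floor y by rewrite floor_ge_int.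
have fl2 : Num.floor y <= 1.
  by rewrite -(ler_int R) (le_trans (floor_le y)).
have ce1 : -1 <= Num.ceil y by rewrite -(ler_int R) (le_trans _ (ceil_ge y)).
have ce2 : Num.ceil y <= 1 by rewrite ceil_le_int.
case: (leP (y - (Num.floor y)%:~R) ((Num.ceil y)%:~R - y)) => _.
  exists (Num.floor y); split; last by rewrite ger0_norm // subr_ge0 floor_le.
  by lia.
exists (Num.ceil y); split; last by rewrite ler0_norm ?opprB // subr_le0 ceil_ge.
by lia.
Qed.

Lemma S_facts (R : realType) (d : nat) (e : OK) (x : R) (s : OK) :
  1 < (sigma1 d e : R) -> S_set d e x s ->
  let eps := (sigma1 d e : R) in
  let u := `|(sigma1 d s : R)| in let v := `|(sigma2 d s : R)| in
  0 < (sigma1 d s : R) /\ 0 < v /\ u ^+ 2 <= eps * x /\ v ^+ 2 <= eps * x /\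
  eps^-1 < u / v /\ u / v <= eps.
Proof.
move=> e1 [h1 [h2 [h3 h4]]] eps u v.
rewrite -/eps -/u -/v in h1 h2.
have ep : 0 < eps by apply: lt_trans e1.
have u0 : 0 < u by rewrite /u gtr0_norm.
have v0 : 0 <= v by rewrite /v normr_ge0.
have h4' : u * v <= x by move: h4; rewrite /absNorm normrM.
have h1' : v < eps * u.
  by move: h1; rewrite ltr_pdivrMl.
have vp : 0 < v by nra.
split => //. split => //. split; first by nra.
split; first by nra.
by rewrite ltr_pdivlMr // ler_pdivrMr // mulrC.
Qed.

Lemma W_eq (R : realType) (d : nat) (e s : OK) :
  (Wfun d e s : R) = ln (`|(sigma1 d s : R)| / `|(sigma2 d s : R)|) / (2 * ln (sigma1 d e : R)).
Proof. by rewrite /Wfun normf_div. Qed.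

Lemma ln_bound (R : realType) (eps r : R) : 1 < eps -> eps^-1 < r -> r <= eps ->
  `|ln r| <= ln eps.
Proof.
move=> e1 h1 h2.
have ep : 0 < eps by apply: lt_trans e1.
have rp : 0 < r by apply: lt_trans h1; rewrite invr_gt0.
rewrite ler_norml; apply/andP; split.
  have -> : - ln eps = ln (eps^-1) by rewrite lnV ?posrE.
  by rewrite ler_ln ?posrE ?invr_gt0 // ltW.
by rewrite ler_ln ?posrE.
Qed.

Lemma W_bound (R : realType) (d : nat) (e : OK) (x : R) (s : OK) :
  1 < (sigma1 d e : R) -> S_set d e x s -> `|(Wfun d e s : R)| <= 2^-1.
Proof.
move=> e1 hS.
have [_ [_ [_ [_ [r1 r2]]]]] := S_facts e1 hS.
have hl := ln_bound e1 r1 r2.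
have L0 := ln_gt0 e1.
rewrite W_eq normf_div (ger0_norm (_ : 0 <= 2 * _)); last by rewrite mulr_ge0 // ltW.
rewrite ler_pdivrMr ?mulr_gt0 //.
lra.
Qed.

Lemma int_norm_ge1 (R : realType) (k : int) : k != 0 -> 1 <= `|(k%:~R : R)|.
Proof.
move=> k0; rewrite -intr_norm.
have : (1 <= `|k|)%R by move: k0; lia.
by rewrite -(ler_int R).
Qed.

Lemma ln_sep (R : realType) (eps a b : R) : 0 < a -> a <= eps -> 0 < b -> b <= eps ->
  `|a - b| <= eps * `|ln a - ln b|.
Proof.
wlog: a b / b <= a.
  move=> H a0 ae b0 be; case: (leP b a) => ba; first exact: H.
  by rewrite distrC (distrC (ln a)); apply: H => //; apply: ltW.
move=> ba a0 ae b0 be.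
have ba0 : 0 < b / a by rewrite divr_gt0.
have h' : -1 < b / a - 1 by lra.
have := le_ln1Dx h'; rewrite addrC subrK ln_div ?posrE // => hl.
set t := (a - b) / a.
have at_ : a * t = a - b by rewrite /t mulrC divfK // gt_eqF.
have t0 : 0 <= t by rewrite /t divr_ge0 ?subr_ge0 // ltW.
have tD : t <= ln a - ln b.
  by move: hl; rewrite /t mulrBl divff ?gt_eqF // => hl'; lra.
rewrite (ger0_norm (_ : 0 <= a - b)) ?subr_ge0 //.
rewrite (ger0_norm (_ : 0 <= ln a - ln b)); last by lra.
nra.
Qed.

Lemma sqrtd_ge1 (R : realType) (d : nat) : (0 < d)%N -> 1 <= Num.sqrt (d%:R : R).
Proof.
move=> d0; have h : (1 : R) <= d%:R by rewrite ler1n.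
by rewrite -[X in X <= _]sqrtr1 ler_sqrt.
Qed.

Lemma om_diff_ge1 (R : realType) (d : nat) : (0 < d)%N -> 1 <= (omega1 d : R) - omega2 d.
Proof.
move=> d0; have := sqrtd_ge1 R d0.
rewrite /omega1 /omega2; case: ifP => _ h; lra.
Qed.

Lemma cross_eq (R : realType) (d : nat) (s t : OK) :
  (sigma1 d s : R) * sigma2 d t - sigma1 d t * sigma2 d s =
  - ((s.1 * t.2 - t.1 * s.2)%:~R * (omega1 d - omega2 d)).
Proof.
rewrite /sigma1 /sigma2 intrB !intrM; ring.
Qed.

Lemma sigma_diff (R : realType) (d : nat) (s : OK) :
  (sigma1 d s : R) - sigma2 d s = s.2%:~R * (omega1 d - omega2 d).
Proof. rewrite /sigma1 /sigma2; ring. Qed.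

Lemma sep (R : realType) (d : nat) (e : OK) (x : R) (s t : OK) :
  (0 < d)%N -> 1 < (sigma1 d e : R) -> S_set d e x s -> S_set d e x t ->
  (0 < (sigma2 d s : R)) = (0 < (sigma2 d t : R)) ->
  (s.1 * t.2 - t.1 * s.2 != 0) ->
  (x * (2 * ln (sigma1 d e : R) * (sigma1 d e) ^+ 2))^-1 <= `|(Wfun d e s : R) - Wfun d e t|.
Proof.
move=> d0 e1 hs ht sg k0.
have [A0 [v0 [u2 [v2 [r1 r2]]]]] := S_facts e1 hs.
have [A0' [v0' [u2' [v2' [r1' r2']]]]] := S_facts e1 ht.
move: A0 v0 u2 v2 r1 r2 A0' v0' u2' v2' r1' r2'.
set eps := (sigma1 d e : R).
set A := (sigma1 d s : R); set B := (sigma2 d s : R).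
set A' := (sigma1 d t : R); set B' := (sigma2 d t : R).
move=> A0 v0 u2 v2 r1 r2 A0' v0' u2' v2' r1' r2'.
have ep : 0 < eps by apply: lt_trans e1.
have L0 : 0 < ln eps by exact: ln_gt0.
have num : `| `|A| * `|B'| - `|A'| * `|B| | = `|A * B' - A' * B|.
  rewrite (gtr0_norm A0) (gtr0_norm A0').
  case: (ltP 0 B) => hB.
    have hB' : 0 < B' by rewrite /B' -sg.
    by rewrite (gtr0_norm hB) (gtr0_norm hB').
  have hB' : B' <= 0 by rewrite leNgt /B' -sg -leNgt.
  by rewrite (ler0_norm hB) (ler0_norm hB') -normrN; congr `|_|; ring.
have num1 : 1 <= `|A * B' - A' * B|.
  rewrite /A /B /A' /B' cross_eq normrN normrM.
  have ha := int_norm_ge1 R k0.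
  have hb : 1 <= `|(omega1 d : R) - omega2 d|.
    by rewrite ger0_norm ?om_diff_ge1 // (le_trans _ (om_diff_ge1 R d0)).
  nra.
have BB : `|B| * `|B'| <= eps * x by nra.
set rho := `|A| / `|B|; set rho' := `|A'| / `|B'|.
have rr : rho - rho' = (`|A| * `|B'| - `|A'| * `|B|) / (`|B| * `|B'|).
  by rewrite /rho /rho'; field; rewrite !gt_eqF.
have Bp : 0 < `|B| * `|B'| by rewrite mulr_gt0.
have x0 : 0 < x.
  have : 0 < `|A| ^+ 2 by rewrite exprn_gt0 // normr_gt0 gt_eqF.
  move=> h; nra.
have q1 : (eps * x)^-1 <= `|rho - rho'|.
  rewrite rr normf_div (ger0_norm (ltW Bp)) num.
  apply: (le_trans (y := (`|B| * `|B'|)^-1)).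
    by rewrite lef_pV2 ?posrE ?mulr_gt0.
  by rewrite -[X in X <= _]mul1r ler_pM2r ?invr_gt0.
have rp : 0 < rho by rewrite /rho divr_gt0 // normr_gt0 gt_eqF.
have rp' : 0 < rho' by rewrite /rho' divr_gt0 // normr_gt0 gt_eqF.
have q2 := ln_sep rp r2 rp' r2'.
have h1 : 1 <= `|rho - rho'| * (eps * x).
  by rewrite -ler_pdivrMr ?mulr_gt0 // div1r.
rewrite !W_eq -/eps -/A -/B -/A' -/B' -/rho -/rho' -mulrBl normf_div.
rewrite (ger0_norm (_ : 0 <= 2 * ln eps)); last by rewrite mulr_ge0 // ltW.
set D := `|ln rho - ln rho'| in q2 *.
have ex : 0 < eps * x by rewrite mulr_gt0.
have -> : D / (2 * ln eps) = (D * x * eps ^+ 2) * (x * (2 * ln eps * eps ^+ 2))^-1.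
  by field; rewrite !gt_eqF.
rewrite -[X in X <= _]mul1r ler_pM2r ?invr_gt0 ?mulr_gt0 ?exprn_gt0 //.
nra.
Qed.

Definition cc (s : OK) : int := if s.2 == 0 then s.1 else s.2.

Lemma sigma1_0 (R : realType) (d : nat) : (sigma1 d (0, 0) : R) = 0.
Proof. by rewrite /sigma1 /= mul0r addr0. Qed.

Lemma cc_inj (R : realType) (d : nat) (e : OK) (x : R) (s t : OK) :
  S_set d e x s -> S_set d e x t -> s.1 * t.2 - t.1 * s.2 = 0 -> cc s = cc t -> s = t.
Proof.
case: s => a b; case: t => a' b' hs ht /= h.
rewrite /cc /=.
have ns : (a, b) <> (0, 0).
  by move=> E; move: hs; rewrite E => -[_ [_ [+ _]]]; rewrite sigma1_0 ltxx.
have nt : (a', b') <> (0, 0).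
  by move=> E; move: ht; rewrite E => -[_ [_ [+ _]]]; rewrite sigma1_0 ltxx.
case: (eqVneq b 0) => [b0|b0]; case: (eqVneq b' 0) => [b'0|b'0] E.
- by rewrite b0 b'0 E.
- exfalso; apply: ns; subst; congr pair; nia.
- exfalso; apply: nt; subst; congr pair; nia.
- subst; congr pair; nia.
Qed.

Lemma sqrt_bound (R : realType) (u X : R) : u ^+ 2 <= X -> `|u| <= Num.sqrt X.
Proof.
move=> h; have X0 : 0 <= X by apply: le_trans h; rewrite sqr_ge0.
by rewrite -sqrtr_sqr ler_sqrt.
Qed.

Lemma cc_bound (R : realType) (d : nat) (e : OK) (x : R) (s : OK) :
  (0 < d)%N -> 1 < (sigma1 d e : R) -> S_set d e x s ->
  `|((cc s)%:~R : R)| <= 2 * Num.sqrt (sigma1 d e * x).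
Proof.
move=> d0 e1 hs.
have [A0 [v0 [u2 [v2 _]]]] := S_facts e1 hs.
have su := sqrt_bound u2; rewrite normr_id in su.
have sv := sqrt_bound v2; rewrite normr_id in sv.
have sq0 : 0 <= Num.sqrt ((sigma1 d e : R) * x) by apply: sqrtr_ge0.
rewrite /cc; case: (eqVneq s.2 0) => b0.
  have : (sigma1 d s : R) = s.1%:~R by rewrite /sigma1 b0 mul0r addr0.
  move=> <-; lra.
have hd := om_diff_ge1 R d0.
have : `|(s.2%:~R : R)| <= `|(sigma1 d s : R) - sigma2 d s|.
  rewrite sigma_diff normrM -[X in X <= _]mulr1 ler_wpM2l //.
  by rewrite ger0_norm // (le_trans _ hd).
move=> h; apply: (le_trans h); apply: (le_trans (ler_normB _ _)); lra.
Qed.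

Lemma sum_inj_le (R : realType) (T : eqType) (F : finType) (r : seq T) (key : T -> F)
    (f : T -> R) (g : F -> R) :
  uniq r -> {in r &, injective key} -> (forall s, s \in r -> f s <= g (key s)) ->
  (forall y, 0 <= g y) -> \sum_(s <- r) f s <= \sum_y g y.
Proof.
move=> ur inj hf hg.
apply: (le_trans (y := \sum_(s <- r) g (key s))).
  by rewrite big_seq [X in _ <= X]big_seq; apply: ler_sum => i; exact: hf.
rewrite -(big_map key xpredT g) big_uniq ?map_inj_in_uniq //.
rewrite [X in _ <= X](bigID (fun y => y \in map key r)) /= lerDl.
by apply: sumr_ge0.
Qed.

Lemma harm (R : realType) (n : nat) :
  \sum_(k < n) ((k.+1)%:R : R)^-1 <= 1 + ln (n%:R : R).
Proof.
elim: n => [|n IH]; first by rewrite big_ord0 ln0 // addr0.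
rewrite big_ord_recr /=.
case: n IH => [|n] IH.
  by rewrite big_ord0 add0r invr1 ln1 addr0.
have hn : 0 < (n.+1%:R : R) by rewrite ltr0n.
have h' : -1 < - ((n.+2%:R : R)^-1).
  rewrite ltrN2 invf_lt1 ?ltr0n // ltr1n //.
have := le_ln1Dx h'.
have -> : 1 - (n.+2%:R : R)^-1 = n.+1%:R / n.+2%:R.
  field; rewrite gt_eqF //; have := ler0n R n; lra.
have -> : ln ((n.+1%:R : R) / n.+2%:R) = ln (n.+1%:R : R) - ln (n.+2%:R : R).
  by apply: ln_div; rewrite posrE ltr0n.
move=> hl.
apply: le_trans (lerD IH (lexx ((n.+2%:R : R)^-1))) _.
move: hl; generalize (ln (n.+1%:R : R)) (ln (n.+2%:R : R)) ((n.+2%:R : R)^-1) => a b c; lra.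
Qed.

Lemma close (R : realType) (N y y' : R) : 0 < N -> (0 <= y) = (0 <= y') ->
  Num.truncn (N * `|y|) = Num.truncn (N * `|y'|) -> `|y - y'| < N^-1.
Proof.
move=> N0 sg E.
have a0 : 0 <= N * `|y| by rewrite mulr_ge0 // ltW.
have b0 : 0 <= N * `|y'| by rewrite mulr_ge0 // ltW.
have /andP[h1 h2] := truncn_itv a0.
have /andP[h3 h4] := truncn_itv b0.
rewrite E in h1 h2.
move: (Num.truncn (N * `|y'|)) h1 h2 h3 h4 => n h1 h2 h3 h4.
have hab : `|N * `|y| - N * `|y'| | < 1.
  rewrite ltr_norml; apply/andP; split.
    move: h1 h2 h3 h4; rewrite -natr1; lra.
  move: h1 h2 h3 h4; rewrite -natr1; lra.
have -> : `|y - y'| = `| `|y| - `|y'| |.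
  case: (leP 0 y) => hy.
    have hy' : 0 <= y' by rewrite -sg.
    by rewrite (ger0_norm hy) (ger0_norm hy').
  have hy' : y' < 0 by rewrite ltNge -sg -ltNge.
  by rewrite (ltr0_norm hy) (ltr0_norm hy') -normrN; congr `|_|; ring.
rewrite -mulrBr normrM (gtr0_norm N0) in hab.
by rewrite -div1r ltr_pdivlMr // mulrC.
Qed.

Lemma hh_phi (R : realType) (Z N t : R) : 1 <= Z -> 0 < N -> 0 <= t ->
  hh Z t <= (if Num.truncn (N * t) == 0%N then ln Z
             else N / (Z * (Num.truncn (N * t))%:R)).
Proof.
move=> Z1 N0 t0.
case: ifP => [_|m0]; first exact: hh_le.
have Nt0 : 0 <= N * t by rewrite mulr_ge0 // ltW.
have hm := truncn_le (N * t); rewrite Nt0 in hm.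
move: m0 hm; set m := Num.truncn (N * t) => m0 hm.
have mp : (0 < (m%:R : R)) by rewrite ltr0n lt0n m0.
have Zp : 0 < Z by apply: lt_le_trans Z1.
have tp : 0 < t by nra.
rewrite /hh gt_eqF //.
rewrite ge_min; apply/orP; right.
have -> : N / (Z * m%:R) = (Z * m%:R / N)^-1 by rewrite invf_div.
rewrite lef_pV2 ?posrE ?divr_gt0 ?mulr_gt0 //.
rewrite ler_pdivrMr //; nra.
Qed.

Lemma box_sum (R : realType) (Kp Jp : nat) (phi : nat -> R) :
  \sum_(y : 'I_Kp.+1 * ('I_Jp.+1 * bool * bool * bool)) phi (val y.1) =
  (\sum_(k < Kp.+1) phi k) *+ (Jp.+1 * 8).
Proof.
rewrite -(pair_bigA _ (fun i _ => phi (val i))) /=.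
under eq_bigr do rewrite big_const iter_addr_0.
by rewrite -sumrMnl !card_prod card_ord card_bool -!mulnA.
Qed.

Lemma bucket (R : realType) (d : nat) (e : OK) (x Z beta : R) (r : seq OK) :
  (0 < d)%N -> 1 < (sigma1 d e : R) -> 1 <= x -> 1 <= Z -> `|beta| <= 3 / 2 ->
  uniq r -> (forall s, s \in r -> S_set d e x s) ->
  \sum_(s <- r) hh Z `|(Wfun d e s : R) - beta| <=
  (\sum_(k < (Num.truncn (2 * (2 * ln (sigma1 d e : R) * (sigma1 d e) ^+ 2 + 1) * x)).+1)
     (if (k : nat) == 0%N then ln Z
      else (2 * ln (sigma1 d e : R) * (sigma1 d e) ^+ 2 + 1) * x / (Z * (k : nat)%:R)))
    *+ ((Num.truncn (2 * Num.sqrt ((sigma1 d e : R) * x))).+1 * 8).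
Proof.
move=> d0 e1 x1 Z1 hb ur hr.
set eps := (sigma1 d e : R).
set M := 2 * ln eps * eps ^+ 2 + 1.
set Kp := Num.truncn (2 * M * x).
set Jp := Num.truncn (2 * Num.sqrt (eps * x)).
have L0 : 0 < ln eps by exact: ln_gt0.
have ep : 0 < eps by apply: lt_trans e1.
have M1 : 1 <= M.
  have : 0 <= 2 * ln eps * eps ^+ 2 by rewrite !mulr_ge0 // ?ltW // sqr_ge0.
  rewrite /M; lra.
have x0 : 0 < x by lra.
have Np : 0 < M * x by rewrite mulr_gt0 //; lra.
have hm : forall s, s \in r -> (Num.truncn ((M * x * `|(Wfun d e s : R) - beta|)%R) < Kp.+1)%N.
  move=> s /hr hs; rewrite ltnS /Kp le_truncn //.
  have hW := W_bound e1 hs.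
  have : `|(Wfun d e s : R) - beta| <= 2.
    apply: le_trans (ler_normB _ _) _; lra.
  move=> h; nra.
have hc : forall s, s \in r -> (`|cc s|%N < Jp.+1)%N.
  move=> s /hr hs; rewrite ltnS /Jp truncn_ge_nat ?mulr_ge0 ?sqrtr_ge0 //.
  by rewrite natr_absz intr_norm; apply: cc_bound.
pose key := fun s : OK =>
  ((inord (Num.truncn (M * x * `|Wfun d e s - beta|)) : 'I_Kp.+1),
   ((inord `|cc s|%N : 'I_Jp.+1), (0 <= (Wfun d e s : R) - beta), (0 <= cc s),
    (0 < (sigma2 d s : R)))).
rewrite -(box_sum _ _ (fun k : nat => if k == 0%N then ln Z else M * x / (Z * k%:R))).
apply: (sum_inj_le (key := key)) => //.
- move=> s t hs' ht'; have hs := hr _ hs'; have ht := hr _ ht'.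
  rewrite /key; case=> E1 E2 E3 E4 E5.
  move/(congr1 (@nat_of_ord _)): E1; rewrite !inordK ?hm // => E1.
  move/(congr1 (@nat_of_ord _)): E2; rewrite !inordK ?hc // => E2.
  have Ec : cc s = cc t.
    case: (leP 0 (cc s)) => h.
      have h' : 0 <= cc t by rewrite -E4.
      by rewrite -(gez0_abs h) -(gez0_abs h') E2.
    have h' : cc t < 0 by rewrite ltNge -E4 -ltNge.
    by rewrite -[cc s]opprK -(ltz0_abs h) -[cc t]opprK -(ltz0_abs h') E2.
  apply: (cc_inj hs ht) => //.
  apply/eqP; case: (eqVneq (s.1 * t.2 - t.1 * s.2) 0) => // k0; exfalso.
  have h1 := sep d0 e1 hs ht E5 k0.
  have h2 := close Np E3 E1.
  have hd : (Wfun d e s : R) - beta - (Wfun d e t - beta) = Wfun d e s - Wfun d e t.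
    by ring.
  rewrite hd in h2.
  have h3 : (M * x)^-1 <= (x * (2 * ln eps * eps ^+ 2))^-1.
    rewrite lef_pV2 ?posrE ?mulr_gt0 ?exprn_gt0 //.
    rewrite /M; lra. lra.
  have := lt_le_trans h2 h3; rewrite -/eps => h4.
  by move: (lt_le_trans h4 h1); rewrite ltxx.
- move=> s hs; rewrite /key /= inordK ?hm //.
  by apply: hh_phi => //; apply: normr_ge0.
- move=> y /=; case: ifP => _; first exact: ln_ge0.
  by apply: divr_ge0; apply: mulr_ge0; rewrite ?ler0n //; lra.
Qed.

Lemma sum_phi_le (R : realType) (M x Z : R) : 1 <= M -> 2 <= x -> 1 <= Z ->
  \sum_(k < (Num.truncn (2 * M * x)).+1)
     (if (k : nat) == 0%N then ln Z else M * x / (Z * (k : nat)%:R))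
  <= ln Z + M * x / Z * (1 + ln (2 * M * x)).
Proof.
move=> M1 x2 Z1.
set Kp := Num.truncn (2 * M * x).
rewrite big_ord_recl /=.
have Zp : 0 < Z by lra.
have -> : \sum_(i < Kp) (if (bump 0 i == 0)%N then ln Z else M * x / (Z * (bump 0 i)%:R))
   = M * x / Z * \sum_(i < Kp) ((i.+1)%:R : R)^-1.
  rewrite mulr_sumr; apply: eq_bigr => i _ /=.
  rewrite /bump /= add1n /=; field; have := ler0n R i; rewrite !gt_eqF //; lra.
rewrite lerD2l ler_pM2l ?divr_gt0 ?mulr_gt0; try lra.
apply: le_trans (harm _ _) _.
rewrite lerD2l.
have h0 : 0 <= 2 * M * x by rewrite !mulr_ge0 //; lra.
have hK : (Kp%:R : R) <= 2 * M * x by rewrite truncn_le.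
have hK1 : (0 < Kp)%N by rewrite truncn_gt0; nra.
by rewrite ler_ln ?posrE ?ltr0n //; nra.
Qed.

Definition Mc {R : realType} (eps : R) : R := 2 * ln eps * eps ^+ 2 + 1.
Definition Cb {R : realType} (eps : R) : R :=
  8 * (2 * Num.sqrt eps + 1) * (1 + Mc eps * ((1 + ln (2 * Mc eps)) / ln 2 + 1)).

Lemma sqrt_le_pow (R : realType) (x delta : R) : 1 <= x -> 0 <= delta ->
  Num.sqrt x <= x `^ (2^-1 + delta).
Proof.
move=> x1 d0; rewrite -powR12_sqrt; last lra.
apply: ler_powR => //; lra.
Qed.

Lemma bucket2 (R : realType) (d : nat) (e : OK) (x Z beta delta : R) (r : seq OK) :
  (0 < d)%N -> 1 < (sigma1 d e : R) -> 0 <= delta -> 2 <= x -> 2 <= Z -> `|beta| <= 3 / 2 ->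
  uniq r -> (forall s, s \in r -> S_set d e x s) ->
  \sum_(s <- r) hh Z `|(Wfun d e s : R) - beta| <=
  Cb (sigma1 d e : R) * x `^ (2^-1 + delta) * (ln Z + x * ln x / Z).
Proof.
move=> d0 e1 dl x2 Z2 hb ur hr.
have Z1 : 1 <= Z by lra.
have x1 : 1 <= x by lra.
apply: le_trans (bucket d0 e1 x1 Z1 hb ur hr) _.
set eps := (sigma1 d e : R).
have ep : 0 < eps by apply: lt_trans e1.
have L0 : 0 < ln eps by exact: ln_gt0.
have M1 : 1 <= Mc eps.
  have : 0 <= 2 * ln eps * eps ^+ 2 by rewrite !mulr_ge0 // ?ltW // sqr_ge0.
  rewrite /Mc; lra.
have := sum_phi_le M1 x2 Z1; rewrite /Mc -/eps.
set M := 2 * ln eps * eps ^+ 2 + 1.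
set S := \sum_(k < _) _ => hS.
rewrite -(mulr_natr S).
set Jp := Num.truncn _.
have l2 : 0 < ln (2 : R) by apply: ln_gt0; lra.
have lx : ln 2 <= ln x by rewrite ler_ln ?posrE //; lra.
have lZ : 0 <= ln Z by apply: ln_ge0.
have l2M : 0 <= ln (2 * M) by apply: ln_ge0; rewrite /M -/M; move: M1; rewrite /Mc -/eps -/M; lra.
have hln : ln (2 * M * x) = ln (2 * M) + ln x.
  by rewrite lnM // posrE; move: M1; rewrite /Mc -/eps -/M; lra.
set A := (1 + ln (2 * M)) / ln 2 + 1.
have hA : 1 + ln (2 * M * x) <= A * ln x.
  rewrite hln /A.
  have : 1 + ln (2 * M) <= (1 + ln (2 * M)) / ln 2 * ln x.
    rewrite -mulrA -[X in X <= _]mulr1 ler_wpM2l //; first lra.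
    by rewrite ler_pdivlMl // mulr1.
  generalize ((1 + ln (2 * M)) / ln 2) => u; lra.
have Zp : 0 < Z by lra.
have xZ : 0 <= x * ln x / Z by rewrite divr_ge0 ?mulr_ge0 //; lra.
have MxZ : 0 <= M * x / Z by rewrite divr_ge0 ?mulr_ge0 //; move: M1; rewrite /Mc -/eps -/M; lra.
have hT : S <= (1 + M * A) * (ln Z + x * ln x / Z).
  apply: le_trans hS _.
  have : M * x / Z * (1 + ln (2 * M * x)) <= M * A * (x * ln x / Z).
    apply: le_trans (ler_wpM2l MxZ hA) _.
    by rewrite le_eqVlt; apply/orP; left; apply/eqP; field; rewrite gt_eqF.
  have : 0 <= M * A.
    rewrite mulr_ge0 //; first by move: M1; rewrite /Mc -/eps -/M; lra.
    rewrite /A addr_ge0 // divr_ge0 //; lra.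
  move: xZ lZ; generalize (M * A) (x * ln x / Z) (ln Z) (M * x / Z * (1 + ln (2 * M * x))).
  move=> a b c f; nra.
have sx : 1 <= Num.sqrt x by rewrite -sqrtr1 ler_sqrt //; lra.
have se : 0 <= Num.sqrt eps by apply: sqrtr_ge0.
have hJ : ((Jp.+1 * 8)%:R : R) <= 8 * (2 * Num.sqrt eps + 1) * Num.sqrt x.
  rewrite natrM -addn1 natrD.
  have : (Jp%:R : R) <= 2 * Num.sqrt (eps * x).
    by rewrite /Jp truncn_le mulr_ge0 // sqrtr_ge0.
  rewrite sqrtrM; last exact: ltW.
  move: sx se; generalize (Num.sqrt x) (Num.sqrt eps) (Jp%:R : R) => a b c.
  move=> *; nra.
have hp := sqrt_le_pow x1 dl.
have S0 : 0 <= S.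
  rewrite /S sumr_ge0 // => i _; case: ifP => _ //.
  by rewrite divr_ge0 ?mulr_ge0 ?ler0n //; try lra; move: M1; rewrite /Mc -/eps -/M; lra.
rewrite /Cb /Mc -/eps -/M -/A.
have Q0 : 0 <= ln Z + x * ln x / Z by lra.
have MA0 : 0 <= 1 + M * A.
  rewrite addr_ge0 // mulr_ge0 //; first by move: M1; rewrite /Mc -/eps -/M; lra.
  rewrite /A addr_ge0 // divr_ge0 //; lra.
have J0 : 0 <= ((Jp.+1 * 8)%:R : R) by apply: ler0n.
move: hT hJ hp S0 Q0 MA0 sx se J0.
generalize (ln Z + x * ln x / Z) (1 + M * A) (Num.sqrt x) (x `^ (2^-1 + delta))
  ((Jp.+1 * 8)%:R : R) (Num.sqrt eps) S => Q B sq p J s' S' hT hJ hp S0 Q0 MA0 sx se J0.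
apply: (le_trans (y := (B * Q) * (8 * (2 * s' + 1) * p))).
  apply: ler_pM => //.
  apply: le_trans hJ _; apply: ler_wpM2l => //; lra.
rewrite le_eqVlt; apply/orP; left; apply/eqP; ring.
Qed.


Lemma hh_distZ' (R : realType) (Z W eta : R) : 1 <= Z -> `|W| <= 2^-1 -> -1 <= eta <= 1 ->
  hh Z (distZ (W - eta / 2)) <=
  hh Z `|W - (eta / 2 - 1)| + hh Z `|W - eta / 2| + hh Z `|W - (eta / 2 + 1)|.
Proof.
move=> Z1 hW /andP[h1 h2].
have hy : -1 <= W - eta / 2 <= 1.
  move: hW; rewrite ler_norml => /andP[a b]; apply/andP; split; lra.
have := hh_distZ Z1 hy.
have -> : W - eta / 2 + 1 = W - (eta / 2 - 1) by ring.
have -> : W - eta / 2 - 1 = W - (eta / 2 + 1) by ring.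
by [].
Qed.

Lemma main_sum (R : realType) (d : nat) (e : OK) (eta1 eta2 x Z delta : R) (r : seq OK) :
  (0 < d)%N -> 1 < (sigma1 d e : R) -> 0 <= delta ->
  -1 <= eta1 -> eta1 < eta2 -> eta2 <= 1 -> 2 <= x -> 2 <= Z ->
  uniq r -> (forall s, s \in r -> S_set d e x s) ->
  \sum_(s <- r) TZ eta1 eta2 Z (Wfun d e s) <=
  6 * (Cb (sigma1 d e : R) * x `^ (2^-1 + delta) * (ln Z + x * ln x / Z)).
Proof.
move=> d0 e1 dl h1 h12 h2 x2 Z2 ur hr.
have Z1 : 1 <= Z by lra.
pose W s := (Wfun d e s : R).
apply: (le_trans (y := \sum_(s <- r)
   (hh Z `|W s - (eta1 / 2 - 1)| + hh Z `|W s - eta1 / 2| + hh Z `|W s - (eta1 / 2 + 1)| +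
   (hh Z `|W s - (eta2 / 2 - 1)| + hh Z `|W s - eta2 / 2| + hh Z `|W s - (eta2 / 2 + 1)|)))).
  rewrite big_seq [X in _ <= X]big_seq; apply: ler_sum => s hs.
  have hW := W_bound e1 (hr _ hs).
  apply: le_trans (TZ_le eta1 eta2 (W s) Z1) _.
  apply: lerD; apply: hh_distZ' => //; apply/andP; split; lra.
rewrite !big_split /=.
have B : forall b : R, `|b| <= 3 / 2 -> \sum_(s <- r) hh Z `|W s - b| <=
    Cb (sigma1 d e : R) * x `^ (2^-1 + delta) * (ln Z + x * ln x / Z).
  by move=> b hb; apply: bucket2.
have n1 : forall b : R, -3/2 <= b <= 3/2 -> `|b| <= 3 / 2.
  by move=> b /andP[p q]; rewrite ler_norml; apply/andP; split; lra.
have c1 : -3/2 <= eta1 / 2 - 1 <= 3/2 by apply/andP; split; lra.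
have c2 : -3/2 <= eta1 / 2 <= 3/2 by apply/andP; split; lra.
have c3 : -3/2 <= eta1 / 2 + 1 <= 3/2 by apply/andP; split; lra.
have c4 : -3/2 <= eta2 / 2 - 1 <= 3/2 by apply/andP; split; lra.
have c5 : -3/2 <= eta2 / 2 <= 3/2 by apply/andP; split; lra.
have c6 : -3/2 <= eta2 / 2 + 1 <= 3/2 by apply/andP; split; lra.
have := B _ (n1 _ c1); have := B _ (n1 _ c2); have := B _ (n1 _ c3);
have := B _ (n1 _ c4); have := B _ (n1 _ c5); have := B _ (n1 _ c6).
generalize (Cb (sigma1 d e : R) * x `^ (2^-1 + delta) * (ln Z + x * ln x / Z)) => K.
move=> *; lra.
Qed.


Lemma Cb_gt0 (R : realType) (eps : R) : 1 < eps -> 0 < Cb eps.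
Proof.
move=> e1; have L0 : 0 < ln eps by exact: ln_gt0.
have ep : 0 < eps by apply: lt_trans e1.
have M1 : 1 <= Mc eps.
  have : 0 <= 2 * ln eps * eps ^+ 2 by rewrite !mulr_ge0 // ?ltW // sqr_ge0.
  rewrite /Mc; lra.
have l2 : 0 < ln (2 : R) by apply: ln_gt0; lra.
have l2M : 0 <= ln (2 * Mc eps) by apply: ln_ge0; lra.
have A0 : 0 <= (1 + ln (2 * Mc eps)) / ln 2 + 1.
  by rewrite addr_ge0 // divr_ge0 //; lra.
have se : 0 <= Num.sqrt eps by apply: sqrtr_ge0.
rewrite /Cb; apply: mulr_gt0; first by apply: mulr_gt0; lra.
move: A0 M1; generalize ((1 + ln (2 * Mc eps)) / ln 2 + 1) (Mc eps) => a m *; nra.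
Qed.

Lemma in_support (R : realType) (d : nat) (e : OK) (x : R) (F : OK -> R) (s : OK) :
  s \in finite_support 0 (S_set d e x) F -> S_set d e x s.
Proof.
case: finite_supportP => // X XP _ _ sX.
by apply: XP.
Qed.

Unset Implicit Arguments.

Theorem mainTheorem5 (R : realType) (d : nat) (e : OK) (delta : R) :
  real_quadratic_disc d -> class_number_one d -> is_fundamental_unit (R := R) d e ->
  0 < delta ->
  (exists C : R, 0 < C /\
     forall eta1 eta2 x Z : R, -1 <= eta1 -> eta1 < eta2 -> eta2 <= 1 ->
       2 <= x -> 2 <= Z ->
       \sum_(s \in S_set d e x) TZ eta1 eta2 Z (Wfun d e s)
         <= C * x `^ (2^-1 + delta) * (ln Z + x * ln x / Z)) /\
  (exists C : R, 0 < C /\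
     forall eta1 eta2 x : R, -1 <= eta1 -> eta1 < eta2 -> eta2 <= 1 ->
       2 <= x ->
       \sum_(s \in S_set d e x) TZ eta1 eta2 x (Wfun d e s)
         <= C * x `^ (2^-1 + 2 * delta)).
Proof.
move=> [d1 _] _ [_ [e1 _]] dp.
have d0 : (0 < d)%N by apply: ltn_trans d1.
have Cp := Cb_gt0 e1.
have dl : 0 <= delta by apply: ltW.
split.
  exists (6 * Cb (sigma1 d e : R)); split; first by rewrite mulr_gt0.
  move=> eta1 eta2 x Z h1 h12 h2 x2 Z2.
  apply: le_trans (main_sum d0 e1 dl h1 h12 h2 x2 Z2 _ _) _.
  - exact: finite_support_uniq.
  - by move=> s; apply: in_support.
  by rewrite !mulrA.
exists (6 * Cb (sigma1 d e : R) * 2 / delta); split.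
  by apply: divr_gt0 => //; apply: mulr_gt0 => //; apply: mulr_gt0.
move=> eta1 eta2 x h1 h12 h2 x2.
apply: le_trans (main_sum d0 e1 dl h1 h12 h2 x2 x2 _ _) _.
- exact: finite_support_uniq.
- by move=> s; apply: in_support.
have x0 : 0 < x by lra.
have hx : x != 0 by rewrite gt_eqF.
have -> : ln x + x * ln x / x = 2 * ln x by field.
have hl : delta * ln x <= x `^ delta.
  rewrite -ln_powR; apply: ltW; apply: ln_sublinear; exact: powR_gt0.
have hp : x `^ (2^-1 + 2 * delta) = x `^ (2^-1 + delta) * x `^ delta.
  by rewrite -powRD ?hx ?implybT //; congr (_ `^ _); ring.
rewrite hp.
have p0 : 0 <= x `^ (2^-1 + delta) by apply: powR_ge0.
have lx : ln x <= x `^ delta / delta by rewrite ler_pdivlMr // mulrC.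
move: lx p0 Cp; generalize (x `^ (2^-1 + delta)) (x `^ delta) (Cb (sigma1 d e : R)) => p q c lx p0 Cp.
have -> : 6 * c * 2 / delta * (p * q) = 6 * (c * p * (2 * (q / delta))) by field; rewrite gt_eqF.
rewrite ler_pM2l //; apply: ler_wpM2l; first by rewrite mulr_ge0 // ltW.
lra.
Qed.
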